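(* Assume (H), let $\mu_0$ be a probability measure on $\mathbb R^d$ with bounded support and $\eta\sim\mu_0$, $K:=\sup_\omega\|\eta(\omega)\|_2<\infty$. Then for every $t\in(0,T)$ and all $x,y\in\mathbb R^d$, $$\langle x-y,\,b^{\mu_0}_t(x)-b^{\mu_0}_t(y)\rangle\le\frac{\sigma_t'}{\sigma_t}\,\|x-y\|_2^2\Big[1-\frac{\beta_tK^2}{\sigma_t^2}\Big].$$
   Context: Fix $d\in\mathbb N$ and $T\in(0,\infty]$. Assumption (H): $\sigma:[0,T)\to(0,\infty)$ is continuous, strictly decreasing and differentiable with derivative $\sigma'_t$ bounded on $[0,t_0]$ for every $t_0<T$, $\sigma_0=1$, $\lim_{t\uparrow T}\sigma_t=0$; and $\beta_t:=1-\sigma_t$. $\Gamma_t(x,y):=\|x-\beta_ty\|_2^2/(2\sigma_t^2)$, $\mathcal D^{\mu_0}_t(x):=\mathbb E[\eta e^{-\Gamma_t(x,\eta)}]/\mathbb E[e^{-\Gamma_t(x,\eta)}]$ (expectation over $\eta\sim\mu_0$), and $b^{\mu_0}_t(x):=\frac{\sigma_t'}{\sigma_t}\big(x-\mathcal D^{\mu_0}_t(x)\big)$. *)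

(* Defs.v *)
From HB Require Import structures.
From mathcomp Require Import all_boot all_order all_algebra.
From mathcomp Require Import all_classical all_reals all_analysis.
Set Implicit Arguments. Unset Strict Implicit. Unset Printing Implicit Defensive.
Import Order.TTheory GRing.Theory Num.Theory.
Import numFieldNormedType.Exports.
Local Open Scope classical_set_scope.
Local Open Scope ring_scope.

Section Defs.
Context {R : realType} {d : nat}.

Definition dotv (u v : 'rV[R]_d) : R := \sum_(i < d) u 0 i * v 0 i.
Definition norm2sq (u : 'rV[R]_d) : R := dotv u u.
Definition norm2 (u : 'rV[R]_d) : R := Num.sqrt (norm2sq u).

Definition dom0T (T : \bar R) : set R := [set t | 0 <= t /\ (t%:E < T)%E].

(* Assumption (H); sigma' is the derivative of sigma on [0,T)
   (one-sided at 0, where the difference quotient is taken within [0,T)). *)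
Definition lim_at_T (T : \bar R) (sigma : R -> R) : Prop :=
  match T with
  | EFin r => sigma t @[t --> r^'-] --> 0
  | +oo%E => sigma t @[t --> +oo] --> 0
  | -oo%E => False
  end.

Definition assumptionH (T : \bar R) (sigma sigma' : R -> R) : Prop :=
  (0 < T)%E /\
      {within dom0T T, continuous sigma} /\
      (forall t, dom0T T t -> 0 < sigma t) /\
      (forall s t, dom0T T s -> dom0T T t -> s < t -> sigma t < sigma s) /\
      (forall t, dom0T T t ->
         (fun h => h^-1 * (sigma (t + h) - sigma t))
           @ within [set h | dom0T T (t + h)] ((0:R)^') --> sigma' t) /\
      (forall t0, dom0T T t0 -> exists M : R,
         forall t, 0 <= t <= t0 -> `|sigma' t| <= M) /\
      sigma 0 = 1 /\
      lim_at_T T sigma.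

Definition beta (sigma : R -> R) (t : R) : R := 1 - sigma t.

Definition Gamma (sigma : R -> R) (t : R) (x y : 'rV[R]_d) : R :=
  norm2sq (x - beta sigma t *: y) / (2 * sigma t ^+ 2).

(* D_t^{mu0}(x), with expectations over eta ~ mu0 written as integrals over
   the underlying probability space (componentwise). *)
Definition Dmu {d0 : measure_display} {Omega : measurableType d0}
  (P : probability Omega R) (eta : Omega -> 'rV[R]_d)
  (sigma : R -> R) (t : R) (x : 'rV[R]_d) : 'rV[R]_d :=
  \row_i (Rintegral P setT (fun w => eta w 0 i * expR (- Gamma sigma t x (eta w)))
          / Rintegral P setT (fun w => expR (- Gamma sigma t x (eta w)))).

Definition bmu {d0 : measure_display} {Omega : measurableType d0}
  (P : probability Omega R) (eta : Omega -> 'rV[R]_d)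
  (sigma sigma' : R -> R) (t : R) (x : 'rV[R]_d) : 'rV[R]_d :=
  (sigma' t / sigma t) *: (x - Dmu P eta sigma t x).

End Defs.

(* Main.v *)
Require Import Defs.
From HB Require Import structures.
From mathcomp Require Import all_boot all_order all_algebra.
From mathcomp Require Import all_classical all_reals all_analysis.
From mathcomp Require Import ring lra.
Import Order.TTheory GRing.Theory Num.Theory.
Import numFieldNormedType.Exports.
Set Implicit Arguments. Unset Strict Implicit. Unset Printing Implicit Defensive.
Local Open Scope classical_set_scope.
Local Open Scope ring_scope.

Section Good.
Context {R : realType} {d0 : measure_display} {Omega : measurableType d0}
  (P : probability Omega R).

Definition good (f : Omega -> R) :=
  measurable_fun setT f /\ exists M, forall w, `|f w| <= M.
Definition EE (f : Omega -> R) := Rintegral P setT f.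

Lemma good_int f : good f -> P.-integrable setT (EFin \o f).
Proof.
case=> mf [M hM]; apply: measurable_bounded_integrable => //.
  by apply: (le_lt_trans (probability_le1 P measurableT)); rewrite ltry.
rewrite /bounded_near; exists M; split; first exact: num_real.
move=> K MK w _ /=; apply: le_trans (hM w) _; exact: ltW.
Qed.

Lemma good_ext f g : (forall w, f w = g w) -> good f -> good g.
Proof. by move=> fg; rewrite (_ : f = g) //; apply/funext. Qed.

Lemma good_cst c : good (fun=> c).
Proof. by split; [exact: measurable_cst | exists `|c|]. Qed.

Lemma good_add f g : good f -> good g -> good (fun w => f w + g w).
Proof.
move=> [mf [M hM]] [mg [N hN]]; split; first exact: measurable_realfun.measurable_funD.
by exists (M + N) => w; apply: le_trans (ler_normD _ _) _; apply: lerD.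
Qed.

Lemma good_mul f g : good f -> good g -> good (fun w => f w * g w).
Proof.
move=> [mf [M hM]] [mg [N hN]]; split; first exact: measurable_realfun.measurable_funM.
exists (M * N) => w; rewrite normrM; apply: ler_pM => //.
Qed.

Lemma good_opp f : good f -> good (fun w => - f w).
Proof.
move=> gf; apply: (good_ext _ (good_mul (good_cst (-1)) gf)) => w; lra.
Qed.

Lemma good_exp f : good f -> good (fun w => expR (f w)).
Proof.
move=> [mf [M hM]]; split.
  exact: (measurableT_comp (@measurable_realfun.measurable_expR R)).
exists (expR M) => w; rewrite ger0_norm ?expR_ge0 // ler_expR.
exact: le_trans (ler_norm _) (hM w).
Qed.

Lemma good_sum (I : Type) (r : seq I) (F : I -> Omega -> R) :
  (forall i, good (F i)) -> good (fun w => \sum_(i <- r) F i w).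
Proof.
move=> gF; elim: r => [|i r IH].
  by apply: (good_ext _ (good_cst 0)) => w; rewrite big_nil.
by apply: (good_ext _ (good_add (gF i) IH)) => w; rewrite big_cons.
Qed.

Lemma EE_add f g : good f -> good g -> EE (fun w => f w + g w) = EE f + EE g.
Proof. by move=> gf gg; apply: RintegralD => //; apply: good_int. Qed.

Lemma EE_scale c f : good f -> EE (fun w => c * f w) = c * EE f.
Proof. by move=> gf; apply: RintegralZl => //; apply: good_int. Qed.

Lemma EE_le f g : good f -> good g -> (forall w, f w <= g w) -> EE f <= EE g.
Proof. by move=> gf gg fg; apply: le_Rintegral => //; apply: good_int. Qed.

Lemma EE_cst c : EE (fun=> c) = c.
Proof.
have h : (P : {measure set Omega -> \bar R}) setT = 1%E := probability_setT P.
by rewrite /EE Rintegral_cst // h /= mulr1. Qed.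

Lemma EE_ext f g : (forall w, f w = g w) -> EE f = EE g.
Proof. by move=> fg; rewrite (_ : f = g) //; apply/funext. Qed.

Lemma EE_sum (I : Type) (r : seq I) (F : I -> Omega -> R) :
  (forall i, good (F i)) -> EE (fun w => \sum_(i <- r) F i w) = \sum_(i <- r) EE (F i).
Proof.
move=> gF; elim: r => [|i r IH].
  by rewrite big_nil -[RHS](EE_cst 0); apply: EE_ext => w; rewrite big_nil.
rewrite big_cons -IH -EE_add //; last exact: good_sum.
by apply: EE_ext => w; rewrite big_cons.
Qed.

Lemma pw (z h : R) : 0 <= h ->
  z * expR (h * z) <= z + h * (z * z) * expR (h * `|z|).
Proof.
move=> h0; case: (lerP 0 z) => hz.
  rewrite ger0_norm //.
  have E0 := expR_gt0 (h * z).
  have e := expR_ge1Dx (- (h * z)); rewrite expRN in e.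
  have e' : expR (h * z) * (1 - h * z) <= 1.
    by rewrite mulrC -ler_pdivlMr // div1r.
  nra.
rewrite ltr0_norm //.
have e1 := expR_ge1Dx (h * z).
have e2 := expR_ge1Dx (h * - z).
have f1 : 0 <= (expR (h * z) - 1 - h * z) * (- z) by nra.
have hz' : 0 <= h * - z by apply: mulr_ge0 => //; lra.
have f2 : 0 <= (expR (h * - z) - 1) * (h * (z * z)).
  apply: mulr_ge0; first lra.
  by apply: mulr_ge0 => //; nra.
nra.
Qed.

Ltac goodt := repeat first [assumption | apply: good_cst | apply: good_add
  | apply: good_mul | apply: good_exp | apply: good_opp].
Lemma EE_lin2 a b f g : good f -> good g ->
  EE (fun o => a * f o + b * g o) = a * EE f + b * EE g.
Proof.
move=> gf gg; rewrite EE_add; try goodt.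
by rewrite !EE_scale.
Qed.

Lemma EE_pos f δ : 0 < δ -> good f -> (forall o, δ <= f o) -> δ <= EE f.
Proof.
move=> dp gf hf; rewrite -[X in X <= _](EE_cst δ).
by apply: EE_le => //; goodt.
Qed.

Lemma step w X M δ h : good w -> good X -> 0 < δ -> (forall o, δ <= w o) ->
  (forall o, `|X o| <= M) -> 0 <= h ->
  EE (fun o => X o * (w o * expR (h * X o))) / EE (fun o => w o * expR (h * X o))
  - EE (fun o => X o * w o) / EE w <= h * M ^+ 2 * expR (2 * h * M).
Proof.
move=> gw gX dp wd XM h0.
have w0 o : 0 <= w o by apply: le_trans (ltW dp) (wd o).
have A0 : δ <= EE w by apply: EE_pos.
set A := EE w.
have Apos : 0 < A := lt_le_trans dp A0.
set c := EE (fun o => X o * w o) / A.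
have hXw : EE (fun o => X o * w o) = c * A by rewrite /c mulfVK // gt_eqF.
have cM : `|c| <= M.
  have u : EE (fun o => X o * w o) <= EE (fun o => M * w o).
    apply: EE_le; try goodt => o; apply: ler_wpM2r => //.
    exact: le_trans (ler_norm _) (XM o).
  have l : EE (fun o => (- M) * w o) <= EE (fun o => X o * w o).
    apply: EE_le; try goodt => o; apply: ler_wpM2r => //.
    by have := XM o; rewrite ler_norml => /andP[].
  rewrite EE_scale // hXw in u; rewrite EE_scale // hXw in l.
  rewrite ler_norml; apply/andP; split.
    by rewrite -(ler_pM2r Apos).
  by rewrite -(ler_pM2r Apos).
have M0 : 0 <= M by apply: le_trans (normr_ge0 _) cM.
set e2 := expR (2 * h * M).
set ec := expR (h * c).
have ec0 : 0 < ec by apply: expR_gt0.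
set D := EE (fun o => w o * expR (h * X o)).
have hsplit o : expR (h * X o) = ec * expR (h * (X o - c)).
  by rewrite /ec -expRD; congr expR; ring.
have P1 o : X o * (w o * expR (h * X o)) - c * (w o * expR (h * X o))
    <= ec * (w o * (X o - c)) + (ec * h * e2) * (w o * ((X o - c) * (X o - c))).
  have Zb : `|X o - c| <= 2 * M.
    apply: le_trans (ler_normB _ _) _; have := XM o; lra.
  have := pw (X o - c) h0.
  have eb : expR (h * `|X o - c|) <= e2.
    rewrite /e2 ler_expR; apply: le_trans (ler_wpM2l h0 Zb) _; by rewrite mulrA [h * 2]mulrC.
  have sq : 0 <= h * ((X o - c) * (X o - c)) by apply: mulr_ge0 => //; rewrite -expr2 sqr_ge0.
  move=> hp.
  have hp' : (X o - c) * expR (h * (X o - c)) <= (X o - c) + h * ((X o - c) * (X o - c)) * e2.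
    apply: le_trans hp _; rewrite lerD2l; exact: ler_wpM2l.
  have E1 : X o * (w o * expR (h * X o)) - c * (w o * expR (h * X o)) =
     ec * w o * ((X o - c) * expR (h * (X o - c))) by rewrite hsplit; ring.
  rewrite E1.
  have : ec * w o * ((X o - c) * expR (h * (X o - c))) <=
      ec * w o * ((X o - c) + h * ((X o - c) * (X o - c)) * e2).
    by apply: ler_wpM2l => //; apply: mulr_ge0 => //; exact: ltW.
  move=> H; apply: le_trans H _; rewrite le_eqVlt; apply/orP; left; apply/eqP; ring.
have P2 o : ec * (w o + h * (w o * (X o - c))) <= w o * expR (h * X o).
  rewrite hsplit.
  have := expR_ge1Dx (h * (X o - c)) => ge.
  have : w o * (1 + h * (X o - c)) <= w o * expR (h * (X o - c)) by apply: ler_wpM2l.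
  move=> H.
  have H2 : ec * (w o * (1 + h * (X o - c))) <= ec * (w o * expR (h * (X o - c))).
    by apply: ler_wpM2l => //; exact: ltW.
  have -> : ec * (w o + h * (w o * (X o - c))) = ec * (w o * (1 + h * (X o - c))) by ring.
  by rewrite [w o * (ec * _)]mulrCA.
have EwZ : EE (fun o => w o * (X o - c)) = 0.
  rewrite (EE_ext (g := fun o => 1 * (X o * w o) + (- c) * w o)); last by move=> o; ring.
  by rewrite EE_lin2 ?hXw; try goodt; rewrite -/A; ring.
have EwZ2 : EE (fun o => w o * ((X o - c) * (X o - c))) <= M ^+ 2 * A.
  rewrite (EE_ext (g := fun o => 1 * ((X o * X o) * w o) + (- (2 * c)) * (X o * w o) + (c * c) * w o)); last by move=> o; ring.
  rewrite EE_add; try goodt.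
  rewrite EE_lin2 ?EE_scale ?hXw; try goodt.
  have : EE (fun o => X o * X o * w o) <= EE (fun o => M ^+ 2 * w o).
    apply: EE_le; try goodt => o; apply: ler_wpM2r => //.
    have := XM o; rewrite -[X o * X o]expr2 -real_normK ?num_real //.
    move=> H; rewrite -[M ^+ 2]/(M * M) -[`|X o| ^+ 2]/(`|X o| * `|X o|).
    by apply: ler_pM => //.
  rewrite EE_scale // -/A => H.
  rewrite -/A.
  have cA : 0 <= c * c * A by apply: mulr_ge0; [rewrite -expr2 sqr_ge0 | exact: ltW].
  have -> : 1 * EE (fun o => X o * X o * w o) + - (2 * c) * (c * A) + c * c * A =
     EE (fun o => X o * X o * w o) - c * c * A by ring.
  apply: le_trans H; rewrite lerBlDr lerDl //.
have DA : ec * A <= D.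
  have : EE (fun o => ec * (w o + h * (w o * (X o - c)))) <= D.
    by apply: EE_le; try goodt.
  rewrite EE_scale; try goodt.
  rewrite (EE_ext (g := fun o => 1 * w o + h * (w o * (X o - c)))); last by move=> o; ring.
  by rewrite EE_lin2 ?EwZ; try goodt; rewrite mulr0 addr0 mul1r.
have D0 : 0 < D by apply: lt_le_trans DA; apply: mulr_gt0.
have N : EE (fun o => X o * (w o * expR (h * X o))) - c * D
   <= ec * h * e2 * (M ^+ 2 * A).
  have : EE (fun o => X o * (w o * expR (h * X o)) - c * (w o * expR (h * X o)))
     <= EE (fun o => ec * (w o * (X o - c)) + (ec * h * e2) * (w o * ((X o - c) * (X o - c)))).
    by apply: EE_le; try goodt.
  rewrite EE_lin2; try goodt.
  rewrite EwZ mulr0 add0r.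
  rewrite (EE_ext (g := fun o => 1 * (X o * (w o * expR (h * X o))) + (- c) * (w o * expR (h * X o)))); last by move=> o; ring.
  rewrite EE_lin2; try goodt.
  move=> H; apply: le_trans _ (le_trans H _).
    by rewrite /D mul1r mulNr.
  apply: ler_wpM2l => //; apply: mulr_ge0; [apply: mulr_ge0 => //; exact: ltW|].
  exact: expR_ge0.
rewrite -/D -/A -/c.
have -> : EE (fun o => X o * (w o * expR (h * X o))) / D - c =
   (EE (fun o => X o * (w o * expR (h * X o))) - c * D) / D.
  by field; rewrite gt_eqF.
rewrite ler_pdivrMr //.
apply: le_trans N _.
have e20 : 0 <= e2 by apply: expR_ge0.
have : ec * (h * M ^+ 2 * e2) * A <= (h * M ^+ 2 * e2) * D.
  rewrite -mulrA mulrCA; apply: ler_wpM2l => //.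
  by apply: mulr_ge0 => //; apply: mulr_ge0 => //; exact: sqr_ge0.
move=> H; apply: le_trans _ H; rewrite le_eqVlt; apply/orP; left; apply/eqP; ring.
Qed.
Lemma tele w X M δ a n : good w -> good X -> 0 < δ -> (forall o, δ <= w o) ->
  (forall o, `|X o| <= M) -> 0 <= a -> (0 < n)%N ->
  EE (fun o => X o * (w o * expR (a * X o))) / EE (fun o => w o * expR (a * X o))
  - EE (fun o => X o * w o) / EE w <= a * M ^+ 2 * expR (2 * (a / n%:R) * M).
Proof.
move=> gw gX dp wd XM a0 n0.
set h := a / n%:R.
have h0 : 0 <= h by apply: divr_ge0.
set B := h * M ^+ 2 * expR (2 * h * M).
pose r (k : nat) := EE (fun o => X o * (w o * expR (k%:R * h * X o)))
   / EE (fun o => w o * expR (k%:R * h * X o)).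
have r0 : r 0%N = EE (fun o => X o * w o) / EE w.
  rewrite /r; congr (_ / _); apply: EE_ext => o; rewrite mul0r mul0r expR0 ?mulr1 //.
have M0 : forall o, -M <= X o by move=> o; have := XM o; rewrite ler_norml => /andP[].
have rk : forall k, r k - r 0%N <= k%:R * B.
  elim=> [|k IH]; first by rewrite subrr mul0r.
  pose wk o := w o * expR (k%:R * h * X o).
  have gwk : good wk by rewrite /wk; goodt.
  have kh0 : 0 <= k%:R * h by apply: mulr_ge0.
  have dk : 0 < δ * expR (- (k%:R * h * M)) by apply: mulr_gt0 => //; exact: expR_gt0.
  have wkd o : δ * expR (- (k%:R * h * M)) <= wk o.
    apply: ler_pM; [exact: ltW | exact: expR_ge0 | exact: wd | ].
    by rewrite ler_expR -mulrN; have := ler_wpM2l kh0 (M0 o).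
  have := step gwk gX dk wkd XM h0.
  have E1 : (fun o => X o * (wk o * expR (h * X o))) =
            (fun o => X o * (w o * expR (k.+1%:R * h * X o))).
    apply/funext => o; rewrite /wk -mulrA -expRD; congr (_ * (_ * expR _)).
    by rewrite -addn1 natrD; ring.
  have E2 : (fun o => wk o * expR (h * X o)) =
            (fun o => w o * expR (k.+1%:R * h * X o)).
    apply/funext => o; rewrite /wk -mulrA -expRD; congr (_ * expR _).
    by rewrite -addn1 natrD; ring.
  rewrite E1 E2 -/(r k.+1) => H.
  have -> : r k.+1 - r 0%N = (r k.+1 - r k) + (r k - r 0%N) by ring.
  have -> : k.+1%:R * B = B + k%:R * B by rewrite -addn1 natrD; ring.
  apply: lerD => //.
have := rk n; rewrite r0 /r.
have nh : n%:R * h = a by rewrite /h mulrC divfK // pnatr_eq0 -lt0n.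
have -> : (fun o => X o * (w o * expR (n%:R * h * X o))) = (fun o => X o * (w o * expR (a * X o))).
  by apply/funext => o; rewrite nh.
have -> : (fun o => w o * expR (n%:R * h * X o)) = (fun o => w o * expR (a * X o)).
  by apply/funext => o; rewrite nh.
move=> H; apply: le_trans H _.
by rewrite /B -nh le_eqVlt; apply/orP; left; apply/eqP; ring.
Qed.
Lemma keybound w X M δ a : good w -> good X -> 0 < δ -> (forall o, δ <= w o) ->
  (forall o, `|X o| <= M) -> 0 <= a ->
  EE (fun o => X o * (w o * expR (a * X o))) / EE (fun o => w o * expR (a * X o))
  - EE (fun o => X o * w o) / EE w <= a * M ^+ 2.
Proof.
move=> gw gX dp wd XM a0.
set Δ := _ - _.
have M0 : 0 <= M.
  case: (lerP 0 M) => // Mn.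
  have : EE (fun=> 1) <= EE (fun=> 0).
    apply: EE_le; try goodt => o; have := XM o; have := normr_ge0 (X o); lra.
  rewrite !EE_cst; lra.
set C := a * M ^+ 2 * (2 * a * M) * expR (2 * a * M).
have C0 : 0 <= C.
  apply: mulr_ge0; last exact: expR_ge0.
  apply: mulr_ge0; first by apply: mulr_ge0 => //; exact: sqr_ge0.
  by apply: mulr_ge0 => //; apply: mulr_ge0.
have bn : forall n : nat, (0 < n)%N -> Δ <= a * M ^+ 2 + C / n%:R.
  move=> n n0; apply: le_trans (tele gw gX dp wd XM a0 n0) _.
  have nR : 1 <= n%:R :> R by rewrite ler1n.
  have nR0 : 0 < n%:R :> R by apply: lt_le_trans nR; exact: ltr01.
  set u := 2 * (a / n%:R) * M.
  have u0 : 0 <= u by apply: mulr_ge0 => //; apply: mulr_ge0 => //; apply: divr_ge0.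
  have eu : expR u <= 1 + u * expR u.
    have e := expR_ge1Dx (- u); rewrite expRN in e.
    have Eu := expR_gt0 u.
    have : expR u * (1 - u) <= 1 by rewrite mulrC -ler_pdivlMr // div1r.
    nra.
  have uC : u = (2 * a * M) / n%:R by rewrite /u; field; rewrite gt_eqF.
  have aM2 : 0 <= 2 * a * M by apply: mulr_ge0 => //; apply: mulr_ge0.
  have ub : u <= 2 * a * M.
    by rewrite uC ler_pdivrMr //; apply: ler_peMr.
  have eub : expR u <= expR (2 * a * M) by rewrite ler_expR.
  have aM0 : 0 <= a * M ^+ 2 by apply: mulr_ge0 => //; exact: sqr_ge0.
  apply: le_trans (ler_wpM2l aM0 eu) _.
  rewrite mulrDr mulr1 lerD2l /C uC.
  have : u * expR u <= u * expR (2 * a * M) by apply: ler_wpM2l.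
  rewrite uC => H.
  have := ler_wpM2l aM0 H => H'; apply: le_trans H' _.
  by rewrite le_eqVlt; apply/orP; left; apply/eqP; field; rewrite gt_eqF.
case: (lerP Δ (a * M ^+ 2)) => // hlt; exfalso.
set ε := Δ - a * M ^+ 2.
have e0 : 0 < ε by rewrite /ε subr_gt0.
have := truncnS_gt (C / ε); set n := (_.+1) => hn.
have n0 : (0 < n)%N by [].
have nR0 : 0 < n%:R :> R by rewrite ltr0n.
have := bn n n0.
have : C / n%:R < ε.
  rewrite ltr_pdivrMr //; rewrite ltr_pdivrMr // in hn; by rewrite mulrC.
rewrite /ε; lra.
Qed.
End Good.
Ltac goodt := repeat first [assumption | apply: good_cst | apply: good_add
  | apply: good_mul | apply: good_exp | apply: good_opp].
Lemma deriv_nonpos (R : realType) (T : \bar R) (sigma sigma' : R -> R) (t : R) :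
  0 < t -> (t%:E < T)%E ->
  (forall s t, dom0T T s -> dom0T T t -> s < t -> sigma t < sigma s) ->
  (fun h => h^-1 * (sigma (t + h) - sigma t))
     @ within [set h | dom0T T (t + h)] ((0:R)^') --> sigma' t ->
  sigma' t <= 0.
Proof.
move=> t0 tT sdec hd; case: (lerP (sigma' t) 0) => // hp; exfalso.
have := cvgr_gt _ hd _ hp.
move=> /(_ (within_filter _ _)).
rewrite near_withinE /= near_withinE => /nbhs_ballP [e /= e0 he].
have key : forall h, - t <= h -> h < 0 -> `|h| < e -> False.
  move=> h h1 h2 h3.
  have hb : ball (0:R) e h by rewrite /ball /= sub0r normrN.
  have := he h hb; rewrite /= => H.
  have hA : dom0T T (t + h).
    split; first lra.
    by apply: le_lt_trans tT; rewrite lee_fin; lra.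
  have dt : dom0T T t by split; [exact: ltW|].
  have := H (ltr0_neq0 h2) hA.
  have := sdec (t + h) t hA dt ltac:(lra).
  have : h^-1 < 0 by rewrite invr_lt0.
  nra.
case: (lerP e t) => et.
  apply: (key (- (e / 2))); rewrite ?ltr0_norm; lra.
apply: (key (- (t / 2))); rewrite ?ltr0_norm; lra.
Qed.
Lemma sum_lin3 (R : realType) (d : nat) (F G H K : 'I_d -> R) a b c :
  (forall i, F i = a * G i + b * H i + c * K i) ->
  \sum_i F i = a * \sum_i G i + b * \sum_i H i + c * \sum_i K i.
Proof.
move=> E; rewrite (eq_bigr _ (fun i _ => E i)) !big_split /= -!mulr_sumr //.
Qed.

Lemma norm2sq_ge0 (R : realType) (d : nat) (u : 'rV[R]_d) : 0 <= norm2sq u.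
Proof. by apply: sumr_ge0 => i _; rewrite -expr2 sqr_ge0. Qed.

Lemma comp_sq (R : realType) (d : nat) (u : 'rV[R]_d) i : u 0 i * u 0 i <= norm2sq u.
Proof.
rewrite /norm2sq /dotv (bigD1 i) //= lerDl.
by apply: sumr_ge0 => j _; rewrite -expr2 sqr_ge0.
Qed.

Lemma comp_le (R : realType) (d : nat) (u : 'rV[R]_d) i : `|u 0 i| <= norm2 u.
Proof.
by rewrite -sqrtr_sqr /norm2 ler_sqrt ?norm2sq_ge0 // expr2 comp_sq.
Qed.

Lemma cs (R : realType) (d : nat) (u v : 'rV[R]_d) :
  dotv u v ^+ 2 <= norm2sq u * norm2sq v.
Proof.
set A := norm2sq u; set B := norm2sq v; set C := dotv u v.
have A0 : 0 <= A by apply: norm2sq_ge0.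
have : 0 <= \sum_i (A * v 0 i - C * u 0 i) ^+ 2.
  by apply: sumr_ge0 => i _; exact: sqr_ge0.
rewrite (@sum_lin3 R d _ (fun i => v 0 i * v 0 i) (fun i => u 0 i * v 0 i)
   (fun i => u 0 i * u 0 i) (A ^+ 2) (- (2 * A * C)) (C ^+ 2)); last by move=> i; ring.
rewrite -[\sum_i v 0 i * v 0 i]/B -[\sum_i u 0 i * v 0 i]/C -[\sum_i u 0 i * u 0 i]/A.
move=> H.
have H' : 0 <= A * (A * B - C ^+ 2).
  by apply: le_trans H _; rewrite le_eqVlt; apply/orP; left; apply/eqP; ring.
case: (ltrP 0 A) => Ap.
  by rewrite pmulr_rge0 // subr_ge0 in H'.
have A00 : A = 0 by apply/eqP; rewrite eq_le Ap A0.
have u0 : forall i, u 0 i = 0.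
  move=> i; have := comp_sq u i; rewrite -/A A00 => h.
  have : u 0 i * u 0 i == 0 by rewrite eq_le h /= -expr2 sqr_ge0.
  by rewrite mulf_eq0 orbb => /eqP.
have -> : C = 0 by rewrite /C /dotv big1 // => i _; rewrite u0 mul0r.
by rewrite expr0n /= mulr_ge0 // norm2sq_ge0.
Qed.

Lemma sum_lin4 (R : realType) (d : nat) (F G H K L : 'I_d -> R) a b c e :
  (forall i, F i = a * G i + b * H i + c * K i + e * L i) ->
  \sum_i F i = a * \sum_i G i + b * \sum_i H i + c * \sum_i K i + e * \sum_i L i.
Proof.
move=> E; rewrite (eq_bigr _ (fun i _ => E i)) !big_split /= -!mulr_sumr //.
Qed.
Unset Implicit Arguments.
Theorem lemma2p7 (R : realType) (d : nat) (T : \bar R) (sigma sigma' : R -> R)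
  (HH : assumptionH T sigma sigma')
  (d0 : measure_display) (Omega : measurableType d0) (P : probability Omega R)
  (eta : Omega -> 'rV[R]_d)
  (eta_meas : forall i : 'I_d, measurable_fun setT (fun w => eta w 0 i))
  (eta_bdd : exists M : R, forall w, norm2 (eta w) <= M)
  (K : R) (HK : K = sup [set norm2 (eta w) | w in setT]) :
  forall t : R, 0 < t -> (t%:E < T)%E ->
  forall x y : 'rV[R]_d,
    dotv (x - y) (bmu P eta sigma sigma' t x - bmu P eta sigma sigma' t y)
    <= sigma' t / sigma t * norm2sq (x - y)
       * (1 - beta sigma t * K ^+ 2 / sigma t ^+ 2).
Proof.
move=> t t0 tT x y.
case: HH => [T0 [_ [spos [sdec [sder [_ [s01 _]]]]]]].
have dt : dom0T T t by split; [exact: ltW|].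
have d00 : dom0T T 0 by split => //; apply: le_lt_trans tT; rewrite lee_fin ltW.
have p0 : sigma' t <= 0 := deriv_nonpos t0 tT sdec (sder t dt).
have s0 : 0 < sigma t := spos t dt.
have s1 : sigma t < 1 by rewrite -s01; apply: sdec.
have bdef : beta sigma t = 1 - sigma t by [].
set s := sigma t in s0 s1 bdef *.
set p := sigma' t in p0 *.
set b := beta sigma t in bdef *.
have b0 : 0 <= b by rewrite bdef; lra.
have sn0 : s != 0 by rewrite gt_eqF.
case: eta_bdd => Me hMe.
have eK : forall w, norm2 (eta w) <= K.
  move=> w; rewrite HK; have hub : has_ubound [set norm2 (eta w) | w in setT].
    by exists Me => z [w' _ <-].
  by apply: (ub_le_sup hub); exists w.
have gE : forall i, good (fun o => eta o 0 i).
  move=> i; split; first exact: eta_meas.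
  by exists Me => o; apply: le_trans (hMe o); exact: comp_le.
set v := x - y.
pose X o := dotv v (eta o).
have gX : good X.
  apply: (good_ext (f := fun o => \sum_(i <- index_enum 'I_d) v 0 i * eta o 0 i)) => //.
  by apply: good_sum => i; have gEi := gE i; goodt.
have gG : forall z, good (fun o => Gamma sigma t z (eta o)).
  move=> z.
  apply: (good_ext (f := fun o => (\sum_(i <- index_enum 'I_d)
       (z 0 i - b * eta o 0 i) * (z 0 i - b * eta o 0 i)) * (2 * s ^+ 2)^-1)).
    move=> o; rewrite /Gamma /norm2sq /dotv; congr (_ * _); apply: eq_bigr => i _.
    by rewrite !mxE.
  apply: good_mul; last exact: good_cst.
  by apply: good_sum => i; have gEi := gE i; goodt.
pose w z o := expR (- Gamma sigma t z (eta o)).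
have gw : forall z, good (w z) by move=> z; rewrite /w; have gGz := gG z; goodt.
have Dform : forall z, dotv v (Dmu P eta sigma t z) = EE P (fun o => X o * w z o) / EE P (w z).
  move=> z; rewrite /dotv /Dmu.
  transitivity ((\sum_i EE P (fun o => v 0 i * (eta o 0 i * w z o))) / EE P (w z)).
    rewrite mulr_suml; apply: eq_bigr => i _; rewrite EE_scale; last first.
      by have gEi := gE i; have gwz := gw z; goodt.
    by rewrite /EE !mxE mulrA.
  congr (_ / _); rewrite -EE_sum; last by move=> i; have gEi := gE i; have gwz := gw z; goodt.
  apply: EE_ext => o; rewrite /X /dotv mulr_suml; apply: eq_bigr => i _; ring.
have Gexp : forall e, Gamma sigma t x e = Gamma sigma t y e
    + (2 * dotv v y + norm2sq v - 2 * b * dotv v e) / (2 * s ^+ 2).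
  move=> e; rewrite /Gamma -/b -/s.
  have -> : norm2sq (x - b *: e) = norm2sq (y - b *: e)
      + (2 * dotv v y + norm2sq v - 2 * b * dotv v e).
    rewrite /norm2sq /dotv.
    rewrite (@sum_lin4 R d _ (fun i => (y - b *: e) 0 i * (y - b *: e) 0 i)
      (fun i => v 0 i * y 0 i) (fun i => v 0 i * v 0 i) (fun i => v 0 i * e 0 i)
      1 2 1 (- (2 * b))); last by move=> i; rewrite /v !mxE; ring.
    ring.
  by field.
set a := b / s ^+ 2.
set Cst := expR (- ((2 * dotv v y + norm2sq v) / (2 * s ^+ 2))).
have hw : forall o, w x o = Cst * (w y o * expR (a * X o)).
  move=> o; rewrite /w /Cst Gexp -!expRD; congr expR; rewrite /a /X.
  by field; rewrite ?mulf_neq0 // ?pnatr_eq0 // ?expf_neq0.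
have Cpos : 0 < Cst by apply: expR_gt0.
have gwy := gw y.
have gwx := gw x.
have Ex : EE P (fun o => X o * w x o) = Cst * EE P (fun o => X o * (w y o * expR (a * X o))).
  rewrite -EE_scale; last by goodt.
  by apply: EE_ext => o; rewrite hw; ring.
have Ewx : EE P (w x) = Cst * EE P (fun o => w y o * expR (a * X o)).
  rewrite -EE_scale; last by goodt.
  by apply: EE_ext => o; rewrite hw.
have Ddiff : dotv v (Dmu P eta sigma t x) - dotv v (Dmu P eta sigma t y) =
   EE P (fun o => X o * (w y o * expR (a * X o))) / EE P (fun o => w y o * expR (a * X o))
   - EE P (fun o => X o * w y o) / EE P (w y).
  by rewrite !Dform Ex Ewx invfM mulrACA mulfV ?mul1r // gt_eqF.
case: (gG y) => _ [MG hMG].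
have wd : forall o, expR (- MG) <= w y o.
  by move=> o; rewrite /w ler_expR lerN2; apply: le_trans (ler_norm _) (hMG o).
have XM : forall o, `|X o| <= `|K| * norm2 v.
  move=> o.
  have nK : norm2 (eta o) ^+ 2 <= K ^+ 2.
    rewrite -[K ^+ 2]real_normK ?num_real //.
    by apply: ler_pM; rewrite ?sqrtr_ge0 //; apply: le_trans (eK o) (ler_norm _).
  have h1 : X o ^+ 2 <= norm2sq v * K ^+ 2.
    apply: le_trans (cs v (eta o)) _; apply: ler_wpM2l; first exact: norm2sq_ge0.
    by rewrite /norm2 sqr_sqrtr ?norm2sq_ge0 // in nK.
  rewrite -sqrtr_sqr -[X in _ <= X]ger0_norm ?mulr_ge0 ?sqrtr_ge0 //.
  rewrite -sqrtr_sqr ler_sqrt ?sqr_ge0 //.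
  rewrite exprMn real_normK ?num_real // /norm2 sqr_sqrtr ?norm2sq_ge0 //.
  by rewrite mulrC.
have a0 : 0 <= a by apply: divr_ge0 => //; exact: sqr_ge0.
have kb := keybound P gwy gX (expR_gt0 (- MG)) wd XM a0.
rewrite -Ddiff in kb.
have Mid : a * (`|K| * norm2 v) ^+ 2 = b * K ^+ 2 / s ^+ 2 * norm2sq v.
  rewrite exprMn real_normK ?num_real // /norm2 sqr_sqrtr ?norm2sq_ge0 // /a; ring.
rewrite Mid in kb.
have LHSe : dotv v (bmu P eta sigma sigma' t x - bmu P eta sigma sigma' t y)
   = p / s * (norm2sq v - (dotv v (Dmu P eta sigma t x) - dotv v (Dmu P eta sigma t y))).
  rewrite /dotv /norm2sq /bmu -/p -/s.
  transitivity (p / s * (\sum_i v 0 i * v 0 i)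
     + (- (p / s)) * (\sum_i v 0 i * Dmu P eta sigma t x 0 i)
     + (p / s) * (\sum_i v 0 i * Dmu P eta sigma t y 0 i)).
    by apply: sum_lin3 => i; rewrite /v !mxE; ring.
  by rewrite /dotv; ring.
rewrite LHSe.
set Δ := _ - _ in kb *.
set T2 := b * K ^+ 2 / s ^+ 2 in kb *.
set nv := norm2sq v in kb *.
have q0 : p / s <= 0 by rewrite ler_pdivrMr // mul0r.
have h := ler_wnM2l q0 kb.
have -> : p / s * nv * (1 - T2) = p / s * (nv - Δ) + (p / s * Δ - p / s * (T2 * nv)) by ring.
by rewrite lerDl subr_ge0.
Qed.
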